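(* Let $\Gamma_M$ be a perfect matching graph representing a planar trivalent graph $G$ with perfect matching $M$, and assume $(G,M)\notin\mathscr G$. If every arc of the resolution configuration $D_{\Gamma_M}(\overline 0)$ (all-zero state) is an $m$-arc, then $D_{\Gamma_M}(\overline 0)$ is not consistently orientable.
   Context: A perfect matching graph $\Gamma_M$ is an embedding in $S^2$ of a planar trivalent graph $G$ together with a perfect matching $M$; fix an ordering $M_1,\dots,M_n$ of $M$. Resolution configurations: $D=(Z(D),A(D))$, $Z(D)$ a finite set of circles immersed in $S^2$ (union has only transverse double points), $A(D)$ a finite totally ordered set of disjoint embedded arcs meeting the circles exactly in their endpoints. Surgery $s_A(D)$ along $A$: in a small disk around $A$ meeting the circles in segments with ends $z,w$ and $x,y$ ($z,x$ on one side of $A$, $w,y$ on the other), replace them by strands $z$–$y$ and $x$–$w$ crossing once transversally; arcs become $A(D)\setminus\{A\}$. An arc is an $\eta$-, $\Delta$-, or $m$-arc according as surgery changes the number of circles by $0,+1,-1$. Resolutions: for a matching edge $e=uv$, let $a,b$ be the other edges at $u$ and $c,d$ those at $v$, with $a,c$ on the same side of $e$. The $0$-resolution removes $u,v,e$, joins $a$–$c$ and $b$–$d$ by disjoint strands parallel to $e$, and places an arc joining them; the $1$-resolution joins $a$–$d$ and $b$–$c$ by strands crossing once, no arc. $D_{\Gamma_M}(v)$, $v\in\{0,1\}^n$, takes the $v_i$-resolution at $M_i$, with arcs $A_i$ ($v_i=0$) ordered by $i$. (The circles of $D_{\Gamma_M}(\overline 0)$ are pairwise disjoint embedded circles.) Bad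 face: states $v,u$ differing exactly in coordinates $i\neq j$, $v_i=v_j=0$, $u_i=u_j=1$, such that for some ordering of $\{i,j\}$: $A_i$ is an $\eta$-arc of $D_{\Gamma_M}(v)$, $A_j$ is an $\eta$-arc of $s_{A_i}(D_{\Gamma_M}(v))$, $A_j$ is a $\Delta$-arc of $D_{\Gamma_M}(v)$, and $A_i$ is an $m$-arc of $s_{A_j}(D_{\Gamma_M}(v))$. $\mathscr G$ is the family of pairs $(G,M)$ ($G$ planar trivalent, $M$ a perfect matching) such that for every perfect matching graph representing $(G,M)$ (every plane embedding, every ordering of $M$) the hypercube of states contains no bad face. Consistently orientable: a resolution configuration whose circles are pairwise disjoint embedded circles is consistently orientable if the circles can be oriented so that for every arc $A$, in a small disk around $A$ identified orientation-preservingly with $[0,1]^2$ so that the two circle segments become $\{1/3\}\times[0,1]$ and $\{2/3\}\times[0,1]$ and $A$ becomes $[1/3,2/3]\times\{1/2\}$, both segments are oriented in the same (upward) direction. *)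

(* Defs.v *)
From mathcomp Require Import all_boot.

Set Implicit Arguments.
Unset Strict Implicit.
Unset Printing Implicit Defensive.

Section PMG.
Variables (D : finType) (alpha sigma : D -> D).

(* D = darts (half-edges); alpha pairs the two darts of an edge;
   sigma = rotation at vertices (cyclic order of darts around a vertex,
   i.e. the embedding). Trivalent: every sigma-orbit has size 3. *)
Definition trivalent_map : Prop :=
  [/\ forall y, alpha (alpha y) = y, forall y, alpha y != y,
      forall y, sigma (sigma (sigma y)) = y & forall y, sigma y != y].

Definition norbits (f : D -> D) : nat :=
  #|[set [set z | fconnect f y z] | y : D]|.

Definition map_rel : rel D :=
  [rel y z | [|| z == sigma y, y == sigma z | z == alpha y]].
Definition ncomponents : nat :=
  #|[set [set z | connect map_rel y z] | y : D]|.

(* The rotation system is an embedding in S^2: Euler's formula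
   V - E + F = 2 on every component (vertices = sigma-orbits,
   edges = alpha-orbits, faces = orbits of sigma \o alpha). *)
Definition planar_map : Prop :=
  trivalent_map /\
  norbits sigma + norbits (sigma \o alpha) = norbits alpha + 2 * ncomponents.

Variable M : {set D}.
(* M = set of darts of matching edges. *)
Definition perfect_matching : Prop :=
  (forall y, (alpha y \in M) = (y \in M)) /\
  (forall y, #|[set z in M | fconnect sigma y z]| = 1).

(* A state is a set S of matching darts closed under alpha:
   the matching edge of x is 1-resolved iff x \in S. *)
Definition state (S : {set D}) : Prop :=
  S \subset M /\ forall x, (alpha x \in S) = (x \in S).

Definition flip (S : {set D}) (x : D) : {set D} := S :|: [set x; alpha x].

(* For a matching dart x at u (other end alpha x at v), the darts at u
   are x, a = sigma x, b = sigma^2 x, and at v: alpha x,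
   d = sigma (alpha x), c = sigma^2 (alpha x); a and c lie on the same
   side of the edge.  0-resolution joins a-c and b-d, 1-resolution joins
   a-d and b-c.  res S y is the dart joined to the non-matching dart y
   by the resolution strand. *)
Definition res (S : {set D}) (y : D) : D :=
  if sigma (sigma y) \in M then
    let x := sigma (sigma y) in
    (if x \in S then sigma (alpha x) else sigma (sigma (alpha x)))
  else
    let x := sigma y in
    (if x \in S then sigma (sigma (alpha x)) else sigma (alpha x)).

(* circles of D(S): components of the graph on non-matching darts whose
   edges are the non-matching edges and the resolution strands *)
Definition strand_rel (S : {set D}) : rel D :=
  [rel y z | (z == alpha y) || (z == res S y)].
Definition circles (S : {set D}) : {set {set D}} :=
  [set [set z | connect (strand_rel S) y z] | y in ~: M].
Definition ncircles (S : {set D}) : nat := #|circles S|.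

(* Type of the arc at the (0-resolved) matching edge of x in D(S);
   surgery along it yields D(flip S x). *)
Definition eta_arc (S : {set D}) (x : D) : Prop :=
  ncircles (flip S x) = ncircles S.
Definition Delta_arc (S : {set D}) (x : D) : Prop :=
  ncircles (flip S x) = (ncircles S).+1.
Definition m_arc (S : {set D}) (x : D) : Prop :=
  (ncircles (flip S x)).+1 = ncircles S.

Definition bad_face_cond (S : {set D}) (i j : D) : Prop :=
  [/\ eta_arc S i, eta_arc (flip S i) j, Delta_arc S j & m_arc (flip S j) i].

Definition has_bad_face : Prop :=
  exists S i j, [/\ state S, i \in M, j \in M, i \notin S & j \notin S] /\
    [/\ j != i, j != alpha i &
    (bad_face_cond S i j \/ bad_face_cond S j i)].

(* Consistent orientability of D(0): an orientation of the circles is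
   encoded by o y = true iff the circle leaves the vertex of y along the
   edge of y; at the arc of matching dart x the two strands a-c and b-d
   are parallel iff o a = o b. *)
Definition consistently_orientable0 : Prop :=
  exists o : D -> bool,
    (forall y, y \notin M -> o (alpha y) = ~~ o y /\ o (res set0 y) = ~~ o y) /\
    (forall x, x \in M -> o (sigma x) = o (sigma (sigma x))).

End PMG.

(* (G, M) belongs to the family script-G: for every planar embedding
   (rotation system sigma' with the same vertices as sigma) there is no
   bad face. *)
Definition in_scriptG (D : finType) (alpha sigma : D -> D) (M : {set D}) : Prop :=
  forall sigma' : D -> D,
    planar_map alpha sigma' ->
    (forall y z, fconnect sigma' y z = fconnect sigma y z) ->
    ~ has_bad_face alpha sigma' M.

(* Main.v *)
Require Import Defs.
From mathcomp Require Import all_boot fingroup perm.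
Set Implicit Arguments.
Unset Strict Implicit.
Unset Printing Implicit Defensive.
Local Open Scope group_scope.

Lemma orbit3 (D : finType) (f : D -> D) (Hf : forall y, f (f (f y)) = y) y z :
  fconnect f y z -> [\/ z = y, z = f y | z = f (f y)].
Proof.
move/connectP=> [p Hp ->]; elim: p y Hp => [|w p IH] y /=; first by move=> _; constructor 1.
move=> /andP[/eqP Hw Hp]; subst w.
case: (IH _ Hp) => ->; [constructor 2 | constructor 3 | constructor 1] => //.
Qed.

Lemma porbits_split (D : finType) (g : {perm D}) (T : {set D}) :
  (forall y, y \notin T -> g y = y) -> (forall y, y \in T -> g y \in T) ->
  #|porbits g| = #|porbit g @: T| + #|~: T|.
Proof.
move=> Hfix HT.
have fixO y : y \notin T -> porbit g y = [set y].
  move=> yT; apply/setP => z; rewrite inE; apply/porbitP/eqP => [[i ->]|->].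
    by elim: i => [|i IH]; rewrite ?expg0 ?perm1 // expgSr permM IH Hfix.
  by exists 0; rewrite expg0 perm1.
have TO y z : y \in T -> z \in porbit g y -> z \in T.
  move=> yT /porbitP[i ->]; elim: i => [|i IH]; rewrite ?expg0 ?perm1 //.
  by rewrite expgSr permM HT.
have -> : porbits g = (porbit g @: T) :|: (porbit g @: ~: T).
  apply/setP => X; rewrite inE; apply/imsetP/orP => [[y _ ->]|].
    by case: (boolP (y \in T)) => h; [left|right]; apply: imset_f; rewrite ?inE.
  by case=> /imsetP[y _ ->]; exists y.
rewrite cardsU.
have -> : (porbit g @: T) :&: (porbit g @: ~: T) = set0.
  apply/setP => X; rewrite !inE; apply/negbTE/negP => /andP[/imsetP[y1 h1 ->] /imsetP[y2 h2 E]].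
  have := porbit_id g y1; rewrite E fixO; last by rewrite inE in h2.
  by rewrite inE => /eqP E'; subst y2; rewrite inE h1 in h2.
have E : (porbit g @: ~: T) = ((fun y : D => [set y]) @: ~: T).
  by apply: eq_in_imset => y yT; apply: fixO; rewrite inE in yT.
rewrite cards0 subn0 E.
congr (_ + _); rewrite card_imset //; move=> a b; exact: set1_inj.
Qed.

Section Core.
Variables (D : finType) (alpha s : D -> D) (M : {set D}) (o : D -> bool).
Hypothesis Haa : forall y, alpha (alpha y) = y.
Hypothesis Hs3 : forall y, s (s (s y)) = y.
Hypothesis Hsn : forall y, s y != y.
Hypothesis HaM : forall y, (alpha y \in M) = (y \in M).
Hypothesis HM1 : forall x, x \in M -> s x \notin M.
Hypothesis HM2 : forall x, x \in M -> s (s x) \notin M.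
Hypothesis HM3 : forall y, y \notin M -> (s y \in M) || (s (s y) \in M).
Hypothesis Oa : forall y, y \notin M -> o (alpha y) = ~~ o y.
Hypothesis Ov : forall x, x \in M -> o (s (s x)) = o (s x).
Hypothesis Oe : forall x, x \in M -> o (s (alpha x)) = ~~ o (s x).

Local Notation res := (res alpha s M).

Lemma resA S x : x \in M -> res S (s x) = if x \in S then s (alpha x) else s (s (alpha x)).
Proof. by move=> xM; rewrite /Defs.res Hs3 xM. Qed.

Lemma resB S x : x \in M -> res S (s (s x)) = if x \in S then s (s (alpha x)) else s (alpha x).
Proof. by move=> xM; rewrite /Defs.res !Hs3 (negbTE (HM1 xM)). Qed.

Lemma cover y : y \notin M -> exists2 x, x \in M & (y = s x \/ y = s (s x)).
Proof.
move=> yM; case/orP: (HM3 yM) => H.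
  by exists (s y) => //; right; rewrite Hs3.
by exists (s (s y)) => //; left; rewrite Hs3.
Qed.

Section St.
Variable S : {set D}.
Hypothesis HS : forall x, (alpha x \in S) = (x \in S).

Lemma resM y : y \notin M -> res S y \notin M.
Proof.
have aM x : x \in M -> alpha x \in M by rewrite HaM.
move=> /cover [x xM [->|->]].
  by rewrite resA //; case: ifP => _; [apply: HM1 | apply: HM2]; apply: aM.
by rewrite resB //; case: ifP => _; [apply: HM2 | apply: HM1]; apply: aM.
Qed.

Lemma resK y : y \notin M -> res S (res S y) = y.
Proof.
have H x : x \in M -> alpha x \in M by rewrite HaM.
move=> /cover [x xM [->|->]]; [rewrite resA // | rewrite resB //];
  case: ifP => xS; rewrite ?(resA _ (H _ xM)) ?(resB _ (H _ xM)) ?HS ?xS ?Haa //.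
Qed.

Lemma reso y : y \notin M -> o (res S y) = ~~ o y.
Proof.
have H x : x \in M -> alpha x \in M by rewrite HaM.
move=> /cover [x xM [->|->]]; [rewrite resA // | rewrite resB //];
  case: ifP => xS; rewrite ?Ov ?H ?Oe //.
Qed.


Definition T := [set y | (y \notin M) && o y].
Definition gf y := if y \in T then res S (alpha y) else y.

Lemma inT y : (y \in T) = (y \notin M) && o y.
Proof. by rewrite inE. Qed.

Lemma gT y : y \in T -> gf y \in T.
Proof.
move=> yT; rewrite /gf yT; move: yT; rewrite !inT => /andP[yM oy].
have aM : alpha y \notin M by rewrite HaM.
by rewrite resM // reso // Oa // oy.
Qed.

Lemma g_nT y : y \notin T -> gf y = y.
Proof. by rewrite /gf => /negbTE->. Qed.

Lemma gf_inj : injective gf.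
Proof.
move=> y1 y2; case: (boolP (y1 \in T)) => h1; case: (boolP (y2 \in T)) => h2.
- rewrite /gf h1 h2 => E.
  have := congr1 (res S) E.
  move: h1 h2; rewrite !inT => /andP[m1 _] /andP[m2 _].
  rewrite !resK ?HaM // => /(congr1 alpha); by rewrite !Haa.
- by move=> E; have := gT h1; rewrite E g_nT // (negbTE h2).
- by move=> E; have := gT h2; rewrite -E g_nT // (negbTE h1).
- by rewrite !g_nT.
Qed.

Definition gp := perm gf_inj.

Lemma gpE y : gp y = gf y.
Proof. by rewrite permE. Qed.

Lemma gpX i y : y \in T -> (gp ^+ i) y \in T.
Proof.
move=> yT; elim: i => [|i IH]; first by rewrite expg0 perm1.
by rewrite expgSr permM gpE gT.
Qed.

Lemma porbitT y z : y \in T -> z \in porbit gp y -> z \in T.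
Proof. by move=> yT /porbitP[i ->]; apply: gpX. Qed.

Definition C y := [set z | connect (strand_rel alpha s M S) y z].
Definition U y := porbit gp y :|: alpha @: porbit gp y.

Lemma Ustep y w w' : y \in T -> w \in U y -> strand_rel alpha s M S w w' -> w' \in U y.
Proof.
move=> yT; rewrite /U inE => /orP[wO | /imsetP[u uO ->]] /orP[/eqP-> | /eqP->].
- by rewrite inE; apply/orP; right; apply: imset_f.
- have wT := porbitT yT wO.
  set v := (gp^-1) w.
  have gv : gp v = w by rewrite /v permKV.
  have vO : v \in porbit gp y.
    have E1 : porbit gp v = porbit gp w by rewrite -gv; have := porbit_perm gp 1 v; rewrite expg1.
    have E2 : porbit gp w = porbit gp y by apply/eqP; rewrite eq_porbit_mem.
    by rewrite -E2 -E1 porbit_id.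
  have vT := porbitT yT vO.
  move: gv; rewrite gpE /gf vT => <-.
  move: vT; rewrite inT => /andP[vM _].
  rewrite resK ?HaM // inE; apply/orP; right; exact: imset_f.
- by rewrite Haa inE uO.
- have uT := porbitT yT uO.
  have -> : res S (alpha u) = (gp ^+ 1) u by rewrite expg1 gpE /gf uT.
  have E2 : porbit gp u = porbit gp y by apply/eqP; rewrite eq_porbit_mem.
  by rewrite inE -E2 mem_porbit.
Qed.

Lemma conn_g i y : y \in T -> connect (strand_rel alpha s M S) y ((gp ^+ i) y).
Proof.
move=> yT; elim: i => [|i IH]; first by rewrite expg0 perm1 connect0.
rewrite expgSr permM gpE /gf gpX //.
apply: connect_trans IH _.
set w := (gp ^+ i) y.
have h1 : connect (strand_rel alpha s M S) w (alpha w) by apply: connect1; rewrite /strand_rel /= eqxx.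
have h2 : connect (strand_rel alpha s M S) (alpha w) (res S (alpha w)).
  by apply: connect1; rewrite /strand_rel /= eqxx orbT.
exact: connect_trans h1 h2.
Qed.

Lemma CU y : y \in T -> C y = U y.
Proof.
move=> yT; apply/setP => z; rewrite inE; apply/idP/idP.
- move/connectP => [p Hp ->].
  have Hy : y \in U y by rewrite /U inE porbit_id.
  move: Hy Hp; move: {1 3 4}y => w0.
  elim: p w0 => [|w p IH] w0 //= Hw0 /andP[Hw Hp].
  by apply: IH Hp; exact: Ustep Hw0 Hw.
- rewrite /U inE => /orP[/porbitP[i ->] | /imsetP[u /porbitP[i ->] ->]].
    exact: conn_g.
  apply: connect_trans (conn_g i yT) _; apply: connect1; by rewrite /strand_rel /= eqxx.
Qed.

Lemma C_alpha y : C y = C (alpha y).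
Proof.
have h1 : connect (strand_rel alpha s M S) y (alpha y) by apply: connect1; rewrite /strand_rel /= eqxx.
have h2 : connect (strand_rel alpha s M S) (alpha y) y by apply: connect1; rewrite /strand_rel /= Haa eqxx.
apply/setP => z; rewrite !inE; apply/idP/idP => H.
  exact: connect_trans h2 H.
exact: connect_trans h1 H.
Qed.

Lemma circlesE : circles alpha s M S = C @: T.
Proof.
apply/setP => X; apply/imsetP/imsetP => [[y yM ->] | [y yT ->]].
  rewrite inE in yM.
  case oy: (o y).
    by exists y; rewrite // inT yM oy.
  exists (alpha y); last by rewrite -C_alpha.
  by rewrite inT HaM yM Oa // oy.
by exists y => //; move: yT; rewrite inT inE => /andP[].
Qed.

Lemma CT y : y \in T -> C y :&: T = porbit gp y.
Proof.
move=> yT; rewrite CU //; apply/setP => z; rewrite /U !inE.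
apply/idP/idP.
  case/andP => /orP[//|/imsetP[u uO ->]].
  have := porbitT yT uO; rewrite !inT => /andP[uM ou].
  by rewrite HaM uM Oa // ou.
by move=> zO; move: (porbitT yT zO); rewrite inT => ->; rewrite zO.
Qed.

Lemma ncirclesE : ncircles alpha s M S = #|porbit gp @: T|.
Proof.
rewrite /ncircles circlesE.
have -> : porbit gp @: T = (fun X => X :&: T) @: (C @: T).
  rewrite -imset_comp; apply: eq_in_imset => y yT /=; by rewrite CT.
rewrite card_in_imset //.
move=> _ _ /imsetP[y1 h1 ->] /imsetP[y2 h2 ->]; rewrite !CT // => E.
by rewrite !CU // /U E.
Qed.

End St.

Lemma flip_in (S : {set D}) (x z : D) : (z \in flip alpha S x) = [|| z \in S, z == x | z == alpha x].
Proof. by rewrite /flip !inE. Qed.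

Lemma flip_state (S : {set D}) (x : D) : (forall z, (alpha z \in S) = (z \in S)) ->
  forall z, (alpha z \in flip alpha S x) = (z \in flip alpha S x).
Proof.
move=> HS z; rewrite !flip_in HS; congr (_ || _).
have ai : injective alpha := can_inj Haa.
rewrite (inj_eq ai) orbC; congr (_ || _).
by rewrite -{1}(Haa x) (inj_eq ai).
Qed.

Lemma res_other (S : {set D}) (x w : D) : x \in M -> w \notin M ->
  w \notin [:: s x; s (s x); s (alpha x); s (s (alpha x))] ->
  res (flip alpha S x) w = res S w.
Proof.
move=> xM wM; case: (cover wM) => z zM [->|->] Hn.
  rewrite !resA // flip_in.
  case: (boolP (z == x)) => [/eqP E|_]; first by subst z; rewrite inE eqxx in Hn.
  case: (boolP (z == alpha x)) => [/eqP E|_]; first by subst z; rewrite !inE eqxx !orbT in Hn.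
  by rewrite !orbF.
rewrite !resB // flip_in.
case: (boolP (z == x)) => [/eqP E|_]; first by subst z; rewrite !inE eqxx !orbT in Hn.
case: (boolP (z == alpha x)) => [/eqP E|_]; first by subst z; rewrite !inE eqxx !orbT in Hn.
by rewrite !orbF.
Qed.

Lemma noeta (S : {set D}) (HS : forall z, (alpha z \in S) = (z \in S)) (x : D) :
  x \in M -> x \notin S -> ncircles alpha s M (flip alpha S x) != ncircles alpha s M S.
Proof.
wlog ox : x / o (s x).
  move=> Hw xM xS; case ox: (o (s x)); first exact: Hw.
  have E : flip alpha S (alpha x) = flip alpha S x.
    by apply/setP => z; rewrite !flip_in Haa; congr (_ || _); rewrite orbC.
  rewrite -E; apply: Hw; [by rewrite Oe ?ox | by rewrite HaM | by rewrite HS].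
move=> xM xS.
have HSf := flip_state x HS.
have aM : alpha x \in M by rewrite HaM.
have aS : (alpha x \in S) = false by rewrite HS; apply/negbTE.
set c := s (s (alpha x)); set d := s (alpha x).
set p := alpha c; set q := alpha d.
have pT : p \in T.
  by rewrite inT HaM HM2 // Oa ?HM2 // /c Ov // Oe // ox.
have qT : q \in T.
  by rewrite inT HaM HM1 // Oa ?HM1 // /d Oe // ox.
have ai : injective alpha := can_inj Haa.
have pq : p != q by rewrite (inj_eq ai) /c /d Hsn.
have key : gp HSf = tperm p q * gp HS.
  apply/permP => y; rewrite permM !gpE.
  case: (eqVneq y p) => [->|yp].
    rewrite tpermL /gf pT qT /p /q !Haa /c /d resB // resA // !flip_in aS eqxx !orbT.
    by rewrite Haa.
  case: (eqVneq y q) => [->|yq].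
    rewrite tpermR /gf pT qT /p /q !Haa /c /d resB // resA // !flip_in aS eqxx !orbT.
    by rewrite Haa.
  rewrite tpermD 1?eq_sym // /gf; case: ifP => yT //.
  move: (yT); rewrite inT => /andP[yM oy].
  have o1 : o (alpha y) = false by rewrite Oa // oy.
  have n1 : alpha y != s x by apply/eqP => E; move: o1; rewrite E ox.
  have n2 : alpha y != s (s x) by apply/eqP => E; move: o1; rewrite E Ov // ox.
  have n3 : alpha y != d by apply/eqP => E; move/eqP: yq; rewrite /q -E Haa.
  have n4 : alpha y != c by apply/eqP => E; move/eqP: yp; rewrite /p -E Haa.
  apply: res_other => //; first by rewrite HaM.
  by rewrite !inE (negbTE n1) (negbTE n2) (negbTE n3) (negbTE n4).
rewrite (ncirclesE HSf) (ncirclesE HS).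
have fx (S0 : {set D}) (HS0 : forall z, (alpha z \in S0) = (z \in S0)) :
    #|porbits (gp HS0)| = #|porbit (gp HS0) @: T| + #|~: T|.
  apply: porbits_split => y yT; rewrite gpE; [exact: g_nT | exact: gT].
have e1 := fx _ HSf; have e2 := fx _ HS.
have := porbits_mul_tperm (gp HS) p q.
rewrite /= -key pq e1 e2 => H; apply/eqP => E; move: H; rewrite E.
by case: (p \notin _) => /=; rewrite ?addnA; move/eqP; rewrite ?eqn_add2l ?eqn_add2r //= addnC -addnA eqn_add2l.
Qed.

End Core.

Local Close Scope group_scope.
Section PM.
Variables (D : finType) (s : D -> D) (M : {set D}).
Hypothesis Hs3 : forall y, s (s (s y)) = y.
Hypothesis Hsn : forall y, s y != y.
Hypothesis Hc : forall y, #|[set z in M | fconnect s y z]| = 1.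

Lemma ss_neq x : s (s x) != x.
Proof.
apply/eqP => E; have := Hsn x; rewrite -{1}E Hs3 => /eqP; apply; by [].
Qed.

Lemma pm_two x w : x \in M -> w \in M -> fconnect s x w -> w = x.
Proof.
move=> xM wM Hw; case: (eqVneq w x) => // ne; exfalso.
have : [set x; w] \subset [set z in M | fconnect s x z].
  by apply/subsetP => z; rewrite !inE => /orP[/eqP->|/eqP->]; rewrite ?xM ?wM ?connect0 ?Hw.
by move/subset_leq_card; rewrite Hc cards2 eq_sym ne.
Qed.

Lemma pmM1 x : x \in M -> s x \notin M.
Proof.
move=> xM; apply/negP => sM.
have := pm_two xM sM (fconnect1 s x); apply/eqP; exact: Hsn.
Qed.

Lemma pmM2 x : x \in M -> s (s x) \notin M.
Proof.
move=> xM; apply/negP => sM.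
have h : fconnect s x (s (s x)) by apply: connect_trans (fconnect1 s x) (fconnect1 s (s x)).
have := pm_two xM sM h; apply/eqP; exact: ss_neq.
Qed.

Lemma pmM3 y : y \notin M -> (s y \in M) || (s (s y) \in M).
Proof.
move=> yM; have : 0 < #|[set z in M | fconnect s y z]| by rewrite Hc.
rewrite card_gt0 => /set0Pn[w]; rewrite inE => /andP[wM /(orbit3 Hs3)[E|E|E]]; subst w.
- by rewrite wM in yM.
- by rewrite wM.
- by rewrite wM orbT.
Qed.
End PM.

Lemma transfer_o (D : finType) (sg s' : D -> D) (o : D -> bool) (M : {set D}) :
  (forall y, sg (sg (sg y)) = y) -> (forall y, s' (s' (s' y)) = y) ->
  (forall y, s' y != y) ->
  (forall y z, fconnect s' y z = fconnect sg y z) ->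
  (forall x, x \in M -> o (sg (sg x)) = o (sg x)) ->
  forall x, x \in M -> o (s' x) = o (sg x) /\ o (s' (s' x)) = o (sg x).
Proof.
move=> H3 H3' Hn' Heq Ov x xM; split.
  have : fconnect sg x (s' x) by rewrite -Heq fconnect1.
  case/(orbit3 H3) => E; rewrite E ?Ov //.
  by move: (Hn' x); rewrite E eqxx.
have : fconnect sg x (s' (s' x)).
  by rewrite -Heq; apply: connect_trans (fconnect1 s' x) (fconnect1 s' (s' x)).
case/(orbit3 H3) => E; rewrite E ?Ov //.
by move: (ss_neq H3' Hn' x); rewrite E eqxx.
Qed.

Theorem mainTheorem10 (D : finType) (alpha sigma : D -> D) (M : {set D}) :
  planar_map alpha sigma ->
  perfect_matching alpha sigma M ->
  ~ in_scriptG alpha sigma M ->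
  (forall x, x \in M -> m_arc alpha sigma M set0 x) ->
  ~ consistently_orientable0 alpha sigma M.
Proof.
move=> [[Haa _ H3 Hn] _] [HaM Hc] Hns _ [o [Ho1 Ho2]].
apply: Hns => s' [[_ _ H3' Hn'] _] Heq [S [i [j [[[_ HS] iM jM iS jS] [_ _ Hcond]]]]].
have Hc' : forall y, #|[set z in M | fconnect s' y z]| = 1%N.
  move=> y; rewrite -(Hc y).
  have -> : [set z in M | fconnect s' y z] = [set z in M | fconnect sigma y z].
    by apply/setP => z; rewrite !inE Heq.
  by [].
have Ov0 : forall x, x \in M -> o (sigma (sigma x)) = o (sigma x).
  by move=> x xM; rewrite (Ho2 x xM).
have Oe0 : forall x, x \in M -> o (sigma (alpha x)) = ~~ o (sigma x).
  move=> x xM.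
  have sM : sigma x \notin M := pmM1 Hn Hc xM.
  have := (Ho1 _ sM).2; rewrite /res H3 xM inE => <-.
  by rewrite Ov0 // HaM.
have T1 := transfer_o H3 H3' Hn' Heq Ov0.
have Ov' : forall x, x \in M -> o (s' (s' x)) = o (s' x).
  by move=> x xM; case: (T1 x xM) => -> ->.
have Oe' : forall x, x \in M -> o (s' (alpha x)) = ~~ o (s' x).
  move=> x xM; have aM : alpha x \in M by rewrite HaM.
  by case: (T1 _ aM) => -> _; case: (T1 _ xM) => -> _; rewrite Oe0.
have NE := noeta Haa H3' Hn' HaM (pmM1 Hn' Hc') (pmM2 H3' Hn' Hc') (pmM3 H3' Hc')
  (fun y yM => (Ho1 y yM).1) Ov' Oe' HS.
case: Hcond => -[Ha _ _ _].
  by move: (NE _ iM iS); rewrite Ha eqxx.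
by move: (NE _ jM jS); rewrite Ha eqxx.
Qed.
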